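(* Let $F$ be a finite field with $q=|F|$ and let $u,v\in\mathbb{N}$. For each $y=(y_1,\ldots,y_{u+v-1})\in F^{u+v-1}$ define the $v\times v$ matrix $J_{u,v}(y)=(y_{u-i+j})_{1\le i\le v,\,1\le j\le v}$, where $y_0:=1$ and $y_k:=0$ for all $k<0$. Then the number of $y\in F^{u+v-1}$ satisfying $\det(J_{u,v}(y))=0$ is $q^{u+v-2}$.
   Context: $\mathbb{N}=\{0,1,2,\ldots\}$. *)

(* Defs.v *)
From HB Require Import structures.
From mathcomp Require Import all_boot all_order all_algebra all_field.
Set Implicit Arguments. Unset Strict Implicit. Unset Printing Implicit Defensive.
Import Order.TTheory GRing.Theory Num.Theory.
Local Open Scope ring_scope.

(* y_k for y = (y_1,...,y_n) in F^n (stored 0-indexed as a row vector),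
   extended by y_0 := 1 and y_k := 0 for k < 0 (and, harmlessly, 0 for k > n,
   which never occurs in J below). *)
Definition yext (F : fieldType) (n : nat) (y : 'rV[F]_n) (k : int) : F :=
  match k with
  | Posz 0 => 1
  | Posz m.+1 => if insub m is Some i then y ord0 i else 0
  | Negz _ => 0
  end.

(* J_{u,v}(y) = (y_{u-i+j})_{1<=i,j<=v}; with 0-indexed ordinals i,j the
   index u-(i+1)+(j+1) equals u-i+j. *)
Definition Jmat (F : fieldType) (u v : nat) (y : 'rV[F]_(u + v - 1)) : 'M[F]_v :=
  \matrix_(i < v, j < v) yext y (u%:Z - (i : nat)%:Z + (j : nat)%:Z).

(* Main.v *)
Require Import Defs.
From HB Require Import structures.
From mathcomp Require Import all_boot all_order all_algebra all_field.
From mathcomp Require Import zify.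
Import Order.TTheory GRing.Theory Num.Theory.
Local Open Scope ring_scope.
Set Implicit Arguments. Unset Strict Implicit. Unset Printing Implicit Defensive.

Definition cf (F : fieldType) v (c : 'rV[F]_v) (k : nat) : F :=
  if insub k is Some i then c ord0 i else 0.
Definition Sp (F : fieldType) n (y : 'rV[F]_n) : {poly F} := \poly_(k < n.+1) yext y k.
Definition Cp (F : fieldType) v (c : 'rV[F]_v) : {poly F} := \poly_(k < v) cf c k.
Definition toRow (F : fieldType) v (p : {poly F}) : 'rV[F]_v := \row_(i < v) p`_i.

Lemma yext_S (F : fieldType) n (y : 'rV[F]_n) (k : nat) :
  yext y (Posz k.+1) = if (k < n)%N then cf y k else 0.
Proof.
rewrite /= /cf; case: insubP => [i -> _|] //=; last by move/negbTE->.
Qed.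

Lemma cf_ord (F : fieldType) v (c : 'rV[F]_v) (i : 'I_v) : cf c i = c ord0 i.
Proof. rewrite /cf; case: insubP => [j _ /val_inj -> //|]; by rewrite ltn_ord. Qed.

Lemma cf_big (F : fieldType) v (c : 'rV[F]_v) k : (v <= k)%N -> cf c k = 0.
Proof. by move=> h; rewrite /cf insubN // -leqNgt. Qed.

Lemma Sp_coef (F : fieldType) n (y : 'rV[F]_n) (k : nat) : (Sp y)`_k = yext y k.
Proof.
rewrite coef_poly; case: ifP => // /negbT; rewrite -leqNgt.
case: k => // k; rewrite ltnS => h; rewrite yext_S; case: ifP => //.
by move=> hk; rewrite cf_big.
Qed.

Lemma Sp_coef0 (F : fieldType) n (y : 'rV[F]_n) : (Sp y)`_0 = 1.
Proof. by rewrite Sp_coef. Qed.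

Lemma Cp_coef (F : fieldType) v (c : 'rV[F]_v) (k : nat) : (Cp c)`_k = cf c k.
Proof.
rewrite coef_poly; case: ifP => // /negbT; rewrite -leqNgt => h; by rewrite cf_big.
Qed.

Lemma size_Cp (F : fieldType) v (c : 'rV[F]_v) : (size (Cp c) <= v)%N.
Proof. exact: size_poly. Qed.

Lemma Cp_toRow (F : fieldType) v (p : {poly F}) : (size p <= v)%N -> Cp (toRow v p) = p.
Proof.
move=> hs; apply/polyP => k; rewrite Cp_coef /cf.
case: insubP => [i hi <-|]; first by rewrite mxE.
by rewrite -leqNgt => hk; rewrite nth_default //; apply: leq_trans hk.
Qed.

Lemma Cp_inj (F : fieldType) v : injective (@Cp F v).
Proof.
move=> c d h; apply/rowP => i; rewrite -!cf_ord -!Cp_coef; by rewrite h.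
Qed.

Lemma Cp0 (F : fieldType) v : Cp (0 : 'rV[F]_v) = 0.
Proof. by apply/polyP => k; rewrite Cp_coef coef0 /cf; case: insubP => // i _ _; rewrite mxE. Qed.

Lemma Cp_eq0 (F : fieldType) v (c : 'rV[F]_v) : (Cp c == 0) = (c == 0).
Proof.
apply/eqP/eqP => [h|->]; last exact: Cp0.
by apply: (@Cp_inj F v); rewrite h Cp0.
Qed.

Lemma Cp_lin (F : fieldType) v (c d : 'rV[F]_v) (a : F) : Cp (c + a *: d) = Cp c + a *: Cp d.
Proof.
apply/polyP => k; rewrite coefD coefZ !Cp_coef /cf.
by case: insubP => [i _ _|_]; rewrite ?mxE ?mulr0 ?addr0.
Qed.

Lemma coefM_single (F : fieldType) (P C : {poly F}) t e :
  (forall k, (k < t)%N -> P`_k = 0) -> (forall k, (k < e)%N -> C`_k = 0) ->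
  (P * C)`_(t + e) = P`_t * C`_e.
Proof.
move=> hP hC; rewrite coefM (bigD1 (@Ordinal (t + e).+1 t (leq_addr e t))) //= addKn.
rewrite big1 ?addr0 // => j hj.
have hj' : (val j != t) by apply: contra hj => /eqP h; apply/eqP/val_inj.
case: (ltngtP j t) hj' => // hjt _; first by rewrite hP ?mul0r.
rewrite hC ?mulr0 //; have := ltn_ord j; lia.
Qed.

Lemma big_trunc (F : fieldType) (G : nat -> F) N M :
  (forall k, (N <= k)%N -> G k = 0) -> (N <= M)%N ->
  \sum_(k < M) G k = \sum_(k < N) G k.
Proof.
move=> hG hNM; rewrite (big_ord_widen M G hNM) [RHS]big_mkcond.
apply: eq_bigr => i _; case: ifP => // /negbT; rewrite -leqNgt => h; exact: hG.
Qed.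

Lemma big_trunc2 (F : fieldType) (G : nat -> F) N M :
  (forall k, (N <= k)%N -> G k = 0) -> (forall k, (M <= k)%N -> G k = 0) ->
  \sum_(k < M) G k = \sum_(k < N) G k.
Proof.
move=> hN hM; rewrite -(@big_trunc F G M (N + M)) ?leq_addl //.
by rewrite (@big_trunc F G N (N + M)) ?leq_addr.
Qed.
Lemma yext_neg (F : fieldType) n (y : 'rV[F]_n) (z : int) : (z < 0)%R -> yext y z = 0.
Proof. by case: z. Qed.

Lemma yext_idx (F : fieldType) n (y : 'rV[F]_n) (u i j : nat) :
  yext y (u%:Z - i%:Z + j%:Z) = if (i <= u + j)%N then yext y (Posz (u + j - i)) else 0.
Proof.
case: leqP => h.
  by congr yext; lia.
by apply: yext_neg; lia.
Qed.

Lemma J_coef (F : fieldType) u v (y : 'rV[F]_(u + v - 1)) (c : 'rV[F]_v) (i0 : 'I_1) (j : 'I_v) :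
  (c *m Jmat y) i0 j = (Sp y * Cp c)`_(u + j).
Proof.
rewrite [i0]ord1.
pose G k := cf c k * (if (k <= u + j)%N then yext y (Posz (u + j - k)) else 0).
rewrite mxE coefMr.
transitivity (\sum_(i < v) G i).
  by apply: eq_bigr => i _; rewrite /G mxE yext_idx cf_ord.
rewrite (@big_trunc2 F G (u + j).+1 v).
- apply: eq_bigr => k _; rewrite /G Sp_coef Cp_coef mulrC.
  by have := ltn_ord k; rewrite ltnS => ->.
- by move=> k hk; rewrite /G ifN ?mulr0 // -ltnNge.
- by move=> k hk; rewrite /G cf_big ?mul0r.
Qed.
Lemma fiber_card (F : finFieldType) v (K : {set 'rV[F]_v}) (D : 'rV[F]_v) (i0 : 'I_v) :
  D ord0 i0 != 0 -> (forall c a, c \in K -> c + a *: D \in K) ->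
  #|K| = (#|F| * #|[set c in K | c ord0 i0 == 0%R]|)%N.
Proof.
move=> hD hK.
have fib : forall a : F, #|[set c in K | c ord0 i0 == a]| = #|[set c in K | c ord0 i0 == 0%R]|.
  move=> a; pose w := (a / D ord0 i0) *: D.
  rewrite -[RHS](card_imset _ (addIr w)); apply: eq_card => x.
  apply/idP/imsetP => [hx|[c hc ->]].
    exists (x + (- (a / D ord0 i0)) *: D); last by rewrite /w scaleNr addrNK.
    rewrite !inE in hx *; case/andP: hx => hx /eqP hxa; rewrite hK //=.
    by rewrite !mxE hxa mulNr mulfVK // subrr.
  rewrite !inE in hc *; case/andP: hc => hc /eqP hc0; rewrite hK //=.
  by rewrite !mxE hc0 add0r mulfVK.
rewrite -sum1_card (partition_big (fun c : 'rV[F]_v => c ord0 i0) xpredT) //=.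
rewrite (eq_bigr (fun _ => #|[set c in K | c ord0 i0 == 0%R]|)).
  rewrite sum_nat_const mulnC; congr (_ * _)%N.
move=> a _; rewrite -(fib a) sum1_card; apply: eq_card => x; by rewrite !inE.
Qed.
Lemma size_le_pred (F : fieldType) (p : {poly F}) k :
  (size p <= k.+1)%N -> p`_k = 0 -> (size p <= k)%N.
Proof.
move=> h1 h2; apply/leq_sizeP => j hj; rewrite leq_eqVlt in hj.
case/orP: hj => [/eqP<-//|hj]; apply: nth_default; exact: leq_trans h1 hj.
Qed.

Lemma trunc_mul (F : fieldType) n (p p' r : {poly F}) :
  (forall i, (i <= n)%N -> p`_i = p'`_i) ->
  forall k, (k <= n)%N -> (p * r)`_k = (p' * r)`_k.
Proof.
move=> h k hk; rewrite !coefM; apply: eq_bigr => j _; rewrite h //.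
by have := ltn_ord j; rewrite ltnS => hj; apply: leq_trans hj hk.
Qed.

Lemma key_poly (F : fieldType) (S Cc CD : {poly F}) u v n :
  (0 < u)%N -> (size Cc < size CD)%N -> (size CD <= v)%N -> (u + v = n.+1)%N -> CD != 0 ->
  (forall m, (u <= m <= n)%N -> (S * Cc)`_m = 0) ->
  (forall m, (u <= m <= n)%N -> (S * CD)`_m = 0) ->
  (S * Cc)`_(u.-1) = 0.
Proof.
move=> hu hsz hsv huv hD hC hDD.
pose AC := \poly_(i < u) (S * Cc)`_i; pose AD := \poly_(i < u) (S * CD)`_i.
have eC : forall k, (k <= n)%N -> (S * Cc)`_k = AC`_k.
  move=> k hk; rewrite coef_poly; case: ifP => // /negbT; rewrite -leqNgt => h.
  by apply: hC; rewrite h hk.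
have eD : forall k, (k <= n)%N -> (S * CD)`_k = AD`_k.
  move=> k hk; rewrite coef_poly; case: ifP => // /negbT; rewrite -leqNgt => h.
  by apply: hDD; rewrite h hk.
have sAC : (size AC <= u)%N by apply: size_poly.
have sAD : (size AD <= u)%N by apply: size_poly.
have E : AD * Cc = AC * CD.
  apply/polyP => k; case: (leqP k n) => hk.
    rewrite -(@trunc_mul _ n (S * CD) AD Cc eD k hk) -(@trunc_mul _ n (S * Cc) AC CD eC k hk).
    by rewrite -!mulrA [Cc * CD]mulrC.
  rewrite !nth_default //.
    apply: leq_trans (size_polyMleq _ _) _; apply: leq_trans hk; lia.
  apply: leq_trans (size_polyMleq _ _) _; apply: leq_trans hk; lia.
rewrite eC; last lia.
apply: nth_default.
have [->|ACn0] := eqVneq AC 0; first by rewrite size_poly0.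
have [Cc0|Ccn0] := eqVneq Cc 0.
  by move: E; rewrite Cc0 mulr0 => /esym/eqP; rewrite mulf_eq0 (negbTE ACn0) (negbTE hD).
have [AD0|ADn0] := eqVneq AD 0.
  by move: E; rewrite AD0 mul0r => /esym/eqP; rewrite mulf_eq0 (negbTE ACn0) (negbTE hD).
have E2 : size (AD * Cc) = size (AC * CD) by rewrite E.
move: E2; rewrite !size_mul //.
have := size_poly_gt0 Cc; rewrite Ccn0 => h1.
have := size_poly_gt0 AC; rewrite ACn0 => h2.
move: (size AC) (size AD) (size Cc) (size CD) h1 h2 hsz sAD => a b c d; clear; lia.
Qed.

Definition Kset (F : finFieldType) n v (y : 'rV[F]_n) (a : nat) : {set 'rV[F]_v} :=
  [set c | [forall m : 'I_n.+1, (a <= m)%N ==> ((Sp y * Cp c)`_m == 0)]].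

Lemma KsetP (F : finFieldType) n v (y : 'rV[F]_n) a (c : 'rV[F]_v) :
  reflect (forall m, (a <= m <= n)%N -> (Sp y * Cp c)`_m = 0) (c \in Kset v y a).
Proof.
rewrite inE; apply: (iffP forallP) => h.
  move=> m /andP[h1 h2]; have hm : (m < n.+1)%N by [].
  by have /implyP/(_ h1)/eqP := h (Ordinal hm).
by move=> m; apply/implyP => hm; apply/eqP/h; rewrite hm -ltnS ltn_ord.
Qed.

Lemma Ks_det (F : finFieldType) u v (y : 'rV[F]_(u + v - 1)) (c : 'rV[F]_v) :
  (0 < u)%N -> (c *m Jmat y == 0) = (c \in Kset v y u).
Proof.
move=> hu; apply/eqP/KsetP => h.
  move=> m /andP[h1 h2]; have hj : (m - u < v)%N by lia.
  have := congr1 (fun M : 'rV[F]_v => M ord0 (Ordinal hj)) h.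
  by rewrite J_coef mxE /= subnKC.
apply/rowP => j; rewrite J_coef mxE; apply: h.
by rewrite leq_addr /=; have := ltn_ord j; lia.
Qed.
Lemma Kset_lin (F : finFieldType) n v (y : 'rV[F]_n) a (c d : 'rV[F]_v) (x : F) :
  c \in Kset v y a -> d \in Kset v y a -> c + x *: d \in Kset v y a.
Proof.
move=> /KsetP hc /KsetP hd; apply/KsetP => m hm.
by rewrite Cp_lin mulrDr -scalerAr coefD coefZ hc // hd // mulr0 addr0.
Qed.

Lemma sing_card (F : finFieldType) u v (y : 'rV[F]_(u + v - 1)) (c0 : 'rV[F]_v) :
  (0 < u)%N -> (0 < v)%N -> c0 != 0 -> c0 \in Kset v y u ->
  #|Kset v y u| = (#|F| * #|[set c in Kset v y u.-1 | cf c v.-1 == 0%R]|)%N.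
Proof.
move=> hu hv hc0 hc0K.
set K := Kset v y u.
have [D hDK hmax] : exists2 D, D \in K & forall c, c \in K -> (size (Cp c) <= size (Cp D))%N.
  by case: (arg_maxnP (fun c => size (Cp c)) hc0K) => D hD hm; exists D.
have hsD : (0 < size (Cp D))%N.
  apply: leq_trans (hmax _ hc0K); by rewrite size_poly_gt0 Cp_eq0.
have hDn0 : Cp D != 0 by rewrite -size_poly_gt0.
set dm := (size (Cp D)).-1.
have hdm : (dm < v)%N by have := size_Cp D; rewrite /dm; lia.
pose i0 := Ordinal hdm.
have hDi0 : D ord0 i0 != 0.
  by rewrite -cf_ord -Cp_coef /= /dm -lead_coefE lead_coef_eq0.
rewrite (@fiber_card F v K D i0 hDi0); last by move=> c x hc; apply: Kset_lin.
congr (_ * _)%N; apply: eq_card => c; rewrite !inE -/K.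
rewrite -cf_ord -Cp_coef /=.
apply/idP/idP.
- case/andP => hcK hci0.
  have {hcK} hcK : c \in K by rewrite inE.
  suff : (c \in Kset v y u.-1) && (cf c v.-1 == 0) by rewrite inE.
  have hsc : (size (Cp c) <= dm)%N.
    apply: size_le_pred; first by rewrite /dm prednK // hmax.
    exact/eqP.
  apply/andP; split; last first.
    by rewrite -Cp_coef nth_default //; apply: leq_trans hsc _; lia.
  apply/KsetP => m /andP[hm1 hm2].
  have [hmu|hmu] := leqP u m; first by move/KsetP: hcK; apply; rewrite hmu.
  have -> : m = u.-1 by lia.
  apply: (@key_poly F (Sp y) (Cp c) (Cp D) u v (u + v - 1)) => //.
  + by rewrite /dm in hsc; lia.
  + exact: size_Cp.
  + lia.
  + by move/KsetP: hcK.
  + by move/KsetP: hDK.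
- case/andP => hcL hcv.
  have {hcL} hcL : c \in Kset v y u.-1 by rewrite inE.
  suff : (c \in K) && ((Cp c)`_dm == 0) by rewrite inE.
  have [->|hCn0] := eqVneq (Cp c) 0; first by rewrite coef0 eqxx andbT; apply/KsetP => m hm; move/KsetP: hcL; apply; lia.
  have hsc : (size (Cp c) <= v.-1)%N.
    apply: size_le_pred; first by rewrite prednK // size_Cp.
    by rewrite Cp_coef; apply/eqP.
  have hsX : (size ('X * Cp c)%R <= v)%N by rewrite mulrC size_mulX //; lia.
  have hK' : toRow v ('X * Cp c) \in K.
    apply/KsetP => m hm; rewrite Cp_toRow // mulrCA coefXM.
    case: ifP => [/eqP hm0|_]; first lia.
    by move/KsetP: hcL; apply; lia.
  have := hmax _ hK'; rewrite Cp_toRow // mulrC size_mulX // => hs.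
  apply/andP; split.
    by apply/KsetP => m /andP[h1 h2]; move/KsetP: hcL; apply; rewrite h2 andbT; lia.
  by rewrite nth_default // /dm -ltnS prednK.
Qed.
Definition Lset (F : finFieldType) n v (y : 'rV[F]_n) (u : nat) : {set 'rV[F]_v} :=
  [set c in Kset v y u.-1 | cf c v.-1 == 0%R].

Lemma Kset_mono (F : finFieldType) n v (y : 'rV[F]_n) a b (c : 'rV[F]_v) :
  (a <= b)%N -> c \in Kset v y a -> c \in Kset v y b.
Proof.
move=> hab /KsetP h; apply/KsetP => m /andP[h1 h2]; apply: h.
by rewrite h2 andbT; apply: leq_trans hab h1.
Qed.

Lemma Kset0 (F : finFieldType) n v (y : 'rV[F]_n) a : (0 : 'rV[F]_v) \in Kset v y a.
Proof. by apply/KsetP => m _; rewrite Cp0 mulr0 coef0. Qed.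

Lemma per_y (F : finFieldType) u v (y : 'rV[F]_(u + v - 1)) :
  (0 < u)%N -> (0 < v)%N ->
  (#|F|.-1 * (\det (Jmat y) == 0%R) + #|F| * #|Lset v y u| = #|Kset v y u| + #|F|.-1)%N.
Proof.
move=> hu hv.
have q0 : (0 < #|F|)%N by apply/card_gt0P; exists 0.
case: det0P => [[c0 hc0 hJ]|hns].
  rewrite (@sing_card F u v y c0) //; last by rewrite -Ks_det // hJ.
  by rewrite /Lset muln1 addnC.
have hK : Kset v y u = [set 0].
  apply/setP => c; rewrite in_set1; apply/idP/eqP => [hc|->]; last exact: Kset0.
  apply/eqP; apply/negPn/negP => hcn0; apply: hns; exists c => //.
  by apply/eqP; rewrite Ks_det.
have hL : Lset v y u = [set 0].
  apply/setP => c; rewrite in_set1; apply/idP/eqP => [hc|->].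
    have : c \in Kset v y u.
      by move: hc; rewrite inE => /andP[hc _]; apply: (Kset_mono _ hc); lia.
    by rewrite hK inE => /eqP.
  rewrite inE Kset0 /= /cf; case: insubP => // i _ _; by rewrite mxE.
rewrite hK hL !cards1 muln0 add0n muln1.
by rewrite add1n prednK.
Qed.
Lemma Sp_S (F : fieldType) n (y : 'rV[F]_n) (i : 'I_n) : (Sp y)`_(i.+1) = y ord0 i.
Proof. by rewrite Sp_coef yext_S ltn_ord cf_ord. Qed.

Lemma countG (F : finFieldType) n v (c : 'rV[F]_v) (a : nat) :
  c != 0 -> (v <= n)%N -> (a <= n.+1)%N ->
  #|[set y : 'rV[F]_n | c \in Kset v y a]| =
  if [exists i : 'I_a, (Cp c)`_i != 0] then (#|F| ^ a.-1)%N else 0%N.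
Proof.
move=> hc hvn han.
set C := Cp c.
have hex : exists k, C`_k != 0.
  by exists (size C).-1; rewrite -lead_coefE lead_coef_eq0 Cp_eq0.
case: (ex_minnP hex) => e hCe hmin.
have hev : (e < v)%N.
  rewrite ltnNge; apply/negP => h; move: hCe; rewrite nth_default //.
    by rewrite eqxx.
  exact: leq_trans (size_Cp c) h.
have hlow : forall k, (k < e)%N -> C`_k = 0.
  by move=> k hk; apply/eqP; apply: contraTT hk => /hmin; rewrite -leqNgt.
case: (ltnP e a) => hea; last first.
  rewrite ifF; last first.
    apply/negbTE/existsPn => i; apply/negP => /hmin h.
    by have := ltn_ord i; lia.
  apply/eqP; rewrite cards_eq0; apply/eqP/setP => y; rewrite inE in_set0.
  apply/negP => /KsetP h.
  have := h e; rewrite hea /= => /(_ (leq_trans (ltnW hev) hvn)).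
  have hce : (Sp y * C)`_e = C`_e.
    by rewrite -[X in _`_X]add0n coefM_single // Sp_coef0 mul1r.
  by rewrite hce => /eqP; apply/negP.
rewrite ifT; last by apply/existsP; exists (Ordinal hea).
pose fr (t : nat) := if (t < a - e - 1)%N then t else (t + (n.+1 - a))%N.
pose Phi (y : 'rV[F]_n) : {ffun 'I_(n.+1 - a) -> F} := [ffun j : 'I_(n.+1 - a) => (Sp y * C)`_(a + j)].
pose rho (y : 'rV[F]_n) : {ffun 'I_a.-1 -> F} := [ffun t : 'I_a.-1 => yext y (Posz (fr t).+1)].
pose g y := (Phi y, rho y).
have ginj : injective g.
  move=> y1 y2 [hPhi hrho].
  suff hS : forall k, (Sp y1)`_k = (Sp y2)`_k.
    by apply/rowP => i; rewrite -!Sp_S hS.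
  elim/ltn_ind => k IH.
  case: k IH => [|s] IH; first by rewrite !Sp_coef0.
  case: (leqP n s) => hsn.
    by rewrite !Sp_coef !yext_S ltnNge hsn.
  case: (ltnP s (a - e - 1)) => hs1.
    have ht : (s < a.-1)%N by lia.
    have := congr1 (fun f : {ffun 'I_a.-1 -> F} => f (Ordinal ht)) hrho; rewrite !ffunE /fr /= hs1.
    by rewrite !Sp_coef.
  case: (leqP (n - e) s) => hs2.
    have ht : (s - (n.+1 - a) < a.-1)%N by lia.
    have := congr1 (fun f : {ffun 'I_a.-1 -> F} => f (Ordinal ht)) hrho; rewrite !ffunE /fr /=.
    rewrite ifF; last by apply/negbTE; rewrite -leqNgt; lia.
    by rewrite subnK ?Sp_coef //; lia.
  have hj : (s.+1 + e - a < n.+1 - a)%N by lia.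
  have := congr1 (fun f : {ffun 'I_(n.+1 - a) -> F} => f (Ordinal hj)) hPhi; rewrite !ffunE /=.
  rewrite subnKC; last by lia.
  move/eqP; rewrite -subr_eq0 -coefB -mulrBl coefM_single //.
    by rewrite mulf_eq0 (negbTE hCe) orbF coefB subr_eq0 => /eqP.
  by move=> k hk; rewrite coefB IH // subrr.
have gbij : bijective g.
  apply: (@inj_card_bij _ _ g ginj).
  rewrite card_prod !card_ffun !card_ord card_mx mul1n -expnD.
  by apply: leq_pexp2l; [apply/card_gt0P; exists 0|lia].
have -> : [set y : 'rV[F]_n | c \in Kset v y a] = g @^-1: [set p : {ffun 'I_(n.+1 - a) -> F} * {ffun 'I_a.-1 -> F} | p.1 == 0].
  apply/setP => y; rewrite in_set /=.
  apply/KsetP/idP => [h|]; rewrite !inE /=.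
    apply/eqP/ffunP => j; rewrite !ffunE; apply: h; rewrite leq_addr /=.
    by have := ltn_ord j; lia.
  move=> /eqP h m /andP[h1 h2]; have hj : (m - a < n.+1 - a)%N by lia.
  have := congr1 (fun f : {ffun 'I_(n.+1 - a) -> F} => f (Ordinal hj)) h; rewrite !ffunE /=.
  by rewrite subnKC.
rewrite on_card_preimset; last exact: onW_bij.
have -> : [set p : {ffun 'I_(n.+1 - a) -> F} * {ffun 'I_a.-1 -> F} | p.1 == 0]
          = setX [set (0 : {ffun 'I_(n.+1 - a) -> F})] [set: {ffun 'I_a.-1 -> F}].
  by apply/setP => p; rewrite !inE andbT.
by rewrite cardsX cards1 cardsT card_ffun card_ord mul1n.
Qed.
Lemma sum_bool_card (T : finType) (b : pred T) : (\sum_(t : T) (b t : nat))%N = #|[set t | b t]|.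
Proof.
rewrite -sum1_card [RHS]big_mkcond /=; apply: eq_bigr => t _; by rewrite inE; case: (b t).
Qed.

Lemma Aset0 (F : fieldType) v a : [exists i : 'I_a, (Cp (0 : 'rV[F]_v))`_i != 0] = false.
Proof. by apply/negbTE/existsPn => i; rewrite Cp0 coef0 eqxx. Qed.

Lemma card_rV (F : finFieldType) n : #|{: 'rV[F]_n}| = (#|F| ^ n)%N.
Proof. by rewrite card_mx mul1n. Qed.

Lemma sumK (F : finFieldType) n v a (P : pred 'rV[F]_v) :
  P 0 -> (v <= n)%N -> (a <= n.+1)%N ->
  (\sum_(y : 'rV[F]_n) #|[set c | P c && (c \in Kset v y a)]|)%N =
  (#|F| ^ n + #|F| ^ a.-1 * #|[set c | P c && [exists i : 'I_a, ((Cp c)`_i != 0)%R]]|)%N.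
Proof.
move=> P0 hvn han.
rewrite (eq_bigr (fun y => \sum_(c : 'rV[F]_v) ((P c && (c \in Kset v y a)) : nat))%N); last first.
  by move=> y _; rewrite sum_bool_card.
rewrite exchange_big /= (bigD1 0) //= P0 /=.
rewrite (eq_bigr (fun y => 1%N)); last by move=> y _; rewrite Kset0.
rewrite sum1_card card_rV; congr (_ + _)%N.
rewrite -sum_bool_card big_distrr /= [RHS](bigD1 0) //= P0 Aset0 muln0 add0n.
apply: eq_bigr => c hc.
rewrite (eq_bigr (fun y => (P c : nat) * (c \in Kset v y a))%N); last by move=> y _; case: (P c); rewrite /= ?mul1n ?mul0n.
rewrite -big_distrr /= sum_bool_card countG //.
by case: (P c); case: ifP; rewrite ?mul0n ?mul1n ?muln0 ?muln1.
Qed.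
Lemma Z0_card (F : finFieldType) v : (0 < v)%N ->
  #|[set c : 'rV[F]_v | ((Cp c)`_0 == 0)%R]| = (#|F| ^ v.-1)%N.
Proof.
move=> hv.
pose i0 : 'I_v := Ordinal hv.
have hD : (toRow v (1 : {poly F})) ord0 i0 != 0 by rewrite mxE coef1 oner_eq0.
have := @fiber_card F v setT _ i0 hD (fun c a _ => in_setT _).
rewrite cardsT card_rV.
have -> : [set c in [set: 'rV[F]_v] | c ord0 i0 == 0] = [set c : 'rV[F]_v | ((Cp c)`_0 == 0)%R].
  by apply/setP => c; rewrite !inE Cp_coef -(cf_ord c i0).
have q0 : (0 < #|F|)%N by apply/card_gt0P; exists 0.
by rewrite -(prednK hv) expnS => /eqP; rewrite eqn_mul2l gtn_eqF //= => /eqP <-.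
Qed.

Lemma AB_card (F : finFieldType) u v : (0 < u)%N -> (0 < v)%N ->
  #|[set c : 'rV[F]_v | true && [exists i : 'I_u, ((Cp c)`_i != 0)%R]]| =
  (#|[set c : 'rV[F]_v | (cf c v.-1 == 0%R) && [exists i : 'I_u.-1, ((Cp c)`_i != 0)%R]]|
    + #|F|.-1 * #|F| ^ v.-1)%N.
Proof.
move=> hu hv.
set A := [set c : 'rV[F]_v | _]; set B := [set c : 'rV[F]_v | _].
set A1 := [set c : 'rV[F]_v | ((Cp c)`_0 != 0)%R].
rewrite -(cardsID A1 A) addnC.
have -> : A :&: A1 = A1.
  apply/setIidPr/subsetP => c; rewrite !inE /= => h.
  by apply/existsP; exists (Ordinal hu).
have hA1 : #|A1| = (#|F|.-1 * #|F| ^ v.-1)%N.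
  have := cardsC A1; rewrite card_rV.
  have -> : ~: A1 = [set c : 'rV[F]_v | ((Cp c)`_0 == 0)%R].
    by apply/setP => c; rewrite !inE negbK.
  have e : (#|F| ^ v = #|F| * #|F| ^ v.-1)%N by rewrite -expnS prednK.
  rewrite Z0_card // e.
  have q0 : (0 < #|F|)%N by apply/card_gt0P; exists 0.
  have e2 : (#|F| * #|F| ^ v.-1 = #|F|.-1 * #|F| ^ v.-1 + #|F| ^ v.-1)%N.
    by rewrite -{3}(mul1n (#|F| ^ v.-1)%N) -mulnDl addn1 prednK.
  by rewrite e2 => /eqP; rewrite eqn_add2r => /eqP.
rewrite hA1; congr (_ + _)%N.
pose sh (c : 'rV[F]_v) := toRow v ('X * Cp c).
have hsz : forall c, c \in B -> (size ('X * Cp c)%R <= v)%N.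
  move=> c; rewrite inE => /andP[hc _].
  have [->|hn0] := eqVneq (Cp c) 0; first by rewrite mulr0 size_poly0.
  rewrite mulrC size_mulX //.
  have := @size_le_pred F (Cp c) v.-1; rewrite prednK // => h.
  have hs : (size (Cp c) <= v.-1)%N.
    by apply: h; [exact: size_Cp | rewrite Cp_coef; apply/eqP].
  by rewrite -ltnS (prednK hv) in hs.
rewrite -(@card_in_imset _ _ sh B).
  apply: eq_card => d; rewrite !inE.
  apply/andP/imsetP => [[hd0 hdA]|[c hcB ->]].
    pose P := \poly_(i < v.-1) (Cp d)`_i.+1.
    have hP : 'X * P = Cp d.
      apply/polyP => k; rewrite coefXM; case: k => [|k] /=.
        by move/negPn: hd0 => /eqP ->.
      rewrite coef_poly; case: ifP => // /negbT; rewrite -leqNgt => hk.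
      by rewrite Cp_coef cf_big // -(prednK hv).
    have hPs : (size P <= v)%N by apply: leq_trans (size_poly _ _) (leq_pred _).
    exists (toRow v P).
      rewrite inE -Cp_coef Cp_toRow // coef_poly ltnn eqxx /=.
      case/existsP: hdA => i hi.
      have hi0 : (0 < i)%N by rewrite lt0n; apply: contra hd0 => /eqP hi'; rewrite -hi' hi.
      have hiv : (i < v)%N.
        rewrite ltnNge; apply: contra hi => h; apply/eqP; rewrite Cp_coef cf_big //.
      have hi' : (i.-1 < u.-1)%N by have := ltn_ord i; lia.
      apply/existsP; exists (Ordinal hi'); rewrite coef_poly /=.
      rewrite ifT; last lia.
      by rewrite prednK.
    apply: (@Cp_inj F v); rewrite /sh (Cp_toRow hPs) hP Cp_toRow //; exact: size_Cp.
  rewrite /sh Cp_toRow ?hsz // coefXM eqxx /=; split; first by rewrite eqxx.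
  move: hcB; rewrite inE => /andP[_ /existsP[i hi]].
  have hi' : (i.+1 < u)%N by have := ltn_ord i; lia.
  by apply/existsP; exists (Ordinal hi'); rewrite /= coefXM.
move=> c1 c2 h1 h2 /(congr1 (@Cp F v)); rewrite /sh !Cp_toRow ?hsz //.
have hX : ('X : {poly F}) != 0 by rewrite polyX_eq0.
by move/(mulfI hX) => /Cp_inj.
Qed.
Unset Implicit Arguments.
Theorem corollary5 (F : finFieldType) (u v : nat) (hu : (0 < u)%N) (hv : (0 < v)%N) :
  #|[set y : 'rV[F]_(u + v - 1) | \det (Jmat y) == 0]| = (#|F| ^ (u + v - 2))%N.
Proof.
have E : (\sum_(y : 'rV[F]_(u + v - 1))
            (#|F|.-1 * (\det (Jmat y) == 0%R) + #|F| * #|Lset v y u|))%N =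
         (\sum_(y : 'rV[F]_(u + v - 1)) (#|Kset v y u| + #|F|.-1))%N.
  by apply: eq_bigr => y _; apply: per_y.
rewrite big_split /= -big_distrr /= sum_bool_card -big_distrr /= big_split /= in E.
rewrite sum_nat_const card_rV in E.
have hvn : (v <= u + v - 1)%N by lia.
have hK := @sumK F (u + v - 1) v u predT erefl hvn ltac:(lia).
have hL0 : (cf (0 : 'rV[F]_v) v.-1 == 0%R) by rewrite /cf; case: insubP => // i _ _; rewrite mxE.
have hL := @sumK F (u + v - 1) v u.-1 (fun c => cf c v.-1 == 0%R) hL0 hvn ltac:(lia).
have eK : forall y : 'rV[F]_(u + v - 1), #|Kset v y u| = #|[set c | predT c && (c \in Kset v y u)]|.
  by move=> y; apply: eq_card => c; rewrite [in RHS]inE.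
have eL : forall y : 'rV[F]_(u + v - 1), #|Lset v y u| = #|[set c | (cf c v.-1 == 0%R) && (c \in Kset v y u.-1)]|.
  by move=> y; apply: eq_card => c; rewrite /Lset [in LHS]inE [in RHS]inE andbC.
rewrite (eq_bigr _ (fun y _ => eK y)) hK (eq_bigr _ (fun y _ => eL y)) hL in E.
rewrite AB_card // in E.
have eN : #|[set t : 'rV[F]_(u + v - 1) | \det (Jmat t) == 0%R]| =
          #|[set y : 'rV[F]_(u + v - 1) | \det (Jmat y) == 0]|.
  by apply: eq_card => t; rewrite !inE.
rewrite eN in E.
move: E; move: #|[set y : 'rV[F]_(u + v - 1) | \det (Jmat y) == 0]| => N E.
set B := #|[set c : 'rV[F]_v | (cf c v.-1 == 0%R) && [exists i : 'I_u.-1, ((Cp c)`_i != 0)%R]]| in E.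
have hB : (#|F| * (#|F| ^ u.-2 * B) = #|F| ^ u.-1 * B)%N.
  have [u1|u2] : u = 1%N \/ (1 < u)%N by lia.
    suff -> : B = 0%N by rewrite !muln0.
    rewrite /B; apply/eqP; rewrite cards_eq0; apply/eqP/setP => c; rewrite !inE.
    by apply/negbTE; rewrite negb_and; apply/orP; right; apply/existsPn => i; have := ltn_ord i; move: (nat_of_ord i); rewrite u1.
  by rewrite mulnA -expnS prednK //; lia.
have q2 : (1 < #|F|)%N.
  by apply/card_gt1P; exists 0, 1; rewrite eq_sym oner_neq0.
have eYZ : (#|F| ^ (u + v - 2) = #|F| ^ u.-1 * #|F| ^ v.-1)%N by rewrite -expnD; congr expn; lia.
rewrite eYZ; move: E; rewrite mulnDr hB.
have hX : (#|F| * #|F| ^ (u + v - 1) = #|F| ^ (u + v - 1) + #|F| ^ (u + v - 1) * #|F|.-1)%N.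
  by rewrite -{1}(prednK (ltnW q2)) mulSn mulnC.
rewrite hX.
move: (#|F| ^ (u + v - 1))%N (#|F| ^ u.-1)%N (#|F| ^ v.-1)%N => X Y Z.
have hp : (0 < #|F|.-1)%N by lia.
move: (#|F|.-1) hp => p hp E.
rewrite mulnDr (mulnCA Y p Z) in E.
have : (p * N = p * (Y * Z))%N.
  move: E; move: (p * N)%N (X * p)%N (Y * B)%N (p * (Y * Z))%N => a b c d. lia.
by move/eqP; rewrite eqn_pmul2l // => /eqP.
Qed.
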